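(* The linear map $F:\mathcal{B}\to QSym$ defined on basis elements by $F(B)=F(P_B)$ (with $F(B_\emptyset)=1$) is a morphism of combinatorial Hopf algebras $(\mathcal{B},\zeta)\to(QSym,\zeta_Q)$; that is, $F$ is a morphism of graded Hopf algebras and $\zeta_Q\circ F=\zeta$. In particular $F(P_{B_1\sqcup B_2})=F(P_{B_1})F(P_{B_2})$ and $\Delta(F(P_B))=\sum_{I\subseteq V}F(P_{B|_I})\otimes F(P_{B/I})$.
   Context: A building set on a finite set $V$ is a collection $B$ of nonempty subsets of $V$ such that $\{v\}\in B$ for all $v\in V$ and such that $I,J\in B$, $I\cap J\neq\emptyset$ imply $I\cup J\in B$. It is connected if $V\in B$, and discrete if it consists only of the singletons. For $I\subseteq V$, the restriction is $B|_I=\{J\in B: J\subseteq I\}$ (a building set on $I$) and the contraction is $B/I=\{J\subseteq V\setminus I: J\neq\emptyset,\ J\in B\text{ or }J\cup I'\in B\text{ for some }I'\subseteq I\}$ (a building set on $V\setminus I$). The nestohedron of $B$ is the Minkowski sum $P_B=\sum_{I\in B}\mathrm{Conv}\{e_i: i\in I\}\subset\mathbb{R}^V$. For a convex polytope $Q\subset\mathbb{R}^V$, a function $f:V\to\mathbb{N}=\{1,2,\dots\}$ is $Q$-generic if the linear functional $x\mapsto\sum_{v\in V}f(v)x_v$ attains its maximum over $Q$ at a unique point. Set $F(Q)=\sum_{f\ Q\text{-generic}}\prod_{v\in V}x_{f(v)}$. For a composition $\alpha=(a_1,\dots,a_k)\models n$, $M_\alpha=\sum_{i_1<\dots<i_k}x_{i_1}^{a_1}\cdots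 x_{i_k}^{a_k}$, $M_{()}=1$. $\mathcal{B}$ is the Hopf algebra over a field $k$ with basis the isomorphism classes of building sets on finite sets, graded by ground set size, with product $B_1\cdot B_2=B_1\sqcup B_2$, coproduct $\Delta(B)=\sum_{I\subseteq V}B|_I\otimes B/I$, unit the empty building set $B_\emptyset$ and counit $\epsilon(B_\emptyset)=1$, $\epsilon(B)=0$ otherwise. The character $\zeta:\mathcal{B}\to k$ is $\zeta(B)=1$ if $B$ is discrete (including $B_\emptyset$) and $0$ otherwise. $QSym$ is the usual Hopf algebra of quasisymmetric functions (coproduct $\Delta M_{(a_1,\dots,a_k)}=\sum_{j=0}^k M_{(a_1,\dots,a_j)}\otimes M_{(a_{j+1},\dots,a_k)}$), and $\zeta_Q:QSym\to k$ is the character with $\zeta_Q(M_\alpha)=1$ if $\alpha=()$ or $\alpha$ has a single part, and $0$ otherwise. *)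

(* Defs.v *)
From HB Require Import structures.
From mathcomp Require Import all_boot all_order all_algebra.
From Stdlib Require Import ClassicalEpsilon.
Set Implicit Arguments. Unset Strict Implicit. Unset Printing Implicit Defensive.
Import Order.TTheory GRing.Theory Num.Theory.
Local Open Scope ring_scope.

Definition pbool (P : Prop) : bool :=
  if excluded_middle_informative P then true else false.

Definition building_set (V : finType) (B : {set {set V}}) : Prop :=
  (forall I, I \in B -> I != set0) /\
  (forall v : V, [set v] \in B) /\
  (forall I J, I \in B -> J \in B -> I :&: J != set0 -> I :|: J \in B).

Definition restr (V : finType) (B : {set {set V}}) (I : {set V})
  : {set {set {v : V | v \in I}}} :=
  [set J : {set {v : V | v \in I}} | [set val x | x in J] \in B].

Definition contr (V : finType) (B : {set {set V}}) (I : {set V})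
  : {set {set {v : V | v \notin I}}} :=
  [set J : {set {v : V | v \notin I}} |
     (J != set0) &&
     (([set val x | x in J] \in B) ||
      [exists I' : {set V}, (I' \subset I) && ([set val x | x in J] :|: I' \in B)])].

Definition dunion (V1 V2 : finType) (B1 : {set {set V1}}) (B2 : {set {set V2}})
  : {set {set (V1 + V2)%type}} :=
  [set [set (@inl V1 V2) x | x in I] | I : {set V1} in B1] :|:
  [set [set (@inr V1 V2) x | x in J] | J : {set V2} in B2].

Definition discrete (V : finType) (B : {set {set V}}) : bool :=
  B == [set [set v] | v : V].

Definition evec (V : finType) (i : V) : V -> rat := fun v => (i == v)%:R.

Definition in_conv (V : finType) (A : {set V}) (p : V -> V -> rat) (x : V -> rat) : Prop :=
  exists l : V -> rat,
    (forall i, i \in A -> 0 <= l i) /\ \sum_(i in A) l i = 1 /\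
    forall v, x v = \sum_(i in A) l i * p i v.

(* P_B = Minkowski sum over I in B of Conv{e_i : i in I} *)
Definition nesto (V : finType) (B : {set {set V}}) (x : V -> rat) : Prop :=
  exists y : {set V} -> V -> rat,
    (forall I, I \in B -> in_conv I (@evec V) (y I)) /\
    forall v, x v = \sum_(I in B) y I v.

Definition linf (V : finType) (f : V -> nat) (x : V -> rat) : rat :=
  \sum_(v : V) (f v)%:R * x v.

Definition generic (V : finType) (Q : (V -> rat) -> Prop) (f : V -> nat) : Prop :=
  exists x, Q x /\
    forall y, Q y -> linf f y <= linf f x /\ (linf f y = linf f x -> forall v, y v = x v).

(* ---------- Formal power series in x_1, x_2, ... ----------
   A series is given by its coefficient function on monomials; the monomial
   x_1^{m_0} x_2^{m_1} ... x_s^{m_{s-1}} is encoded by the list m. *)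
Definition series (k : fieldType) := seq nat -> k.

(* F(Q) = sum over Q-generic f : V -> {1,2,...} of prod_v x_{f(v)};
   f is encoded as g : V -> 'I_s with f v = (g v).+1 *)
Definition Fpoly (k : fieldType) (V : finType) (Q : (V -> rat) -> Prop) : series k :=
  fun m => (#|[set g : {ffun V -> 'I_(size m)} |
                pbool (generic Q (fun v => (g v).+1)) &&
                [forall j : 'I_(size m), #|[set v | g v == j]| == nth 0 m j]]|)%:R.

Definition FB (k : fieldType) (V : finType) (B : {set {set V}}) : series k :=
  Fpoly k (nesto B).

Fixpoint le_seqs (m : seq nat) : seq (seq nat) :=
  if m is a :: m' then [seq i :: s | i <- iota 0 a.+1, s <- le_seqs m'] else [:: [::]].

Definition mulS (k : fieldType) (G H : series k) : series k :=
  fun m => \sum_(m1 <- le_seqs m) G m1 * H [seq (p.2 - p.1)%N | p <- zip m1 m].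

Definition oneS (k : fieldType) : series k :=
  fun m => (all (fun a => a == 0%N) m)%:R.

(* quasisymmetric: coefficient of x_{i1}^{a1}..x_{ir}^{ar} (i1<..<ir) equals
   that of x_1^{a1}..x_r^{ar}; then G = sum_alpha G(alpha) M_alpha *)
Definition qsym (k : fieldType) (G : series k) : Prop :=
  forall m, G m = G [seq a <- m | a != 0%N].

Definition homogeneous (k : fieldType) (n : nat) (G : series k) : Prop :=
  forall m, sumn m != n -> G m = 0.

Definition composition (a : seq nat) : bool := all (fun x => 0 < x)%N a.

(* coefficient of M_alpha in a quasisymmetric G *)
Definition Mcoef (k : fieldType) (G : series k) (alpha : seq nat) : k := G alpha.

(* Delta M_a = sum_j M_(a1..aj) (x) M_(aj+1..ak): coefficient of M_b (x) M_c in Delta G *)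
Definition coprodQ (k : fieldType) (G : series k) (b c : seq nat) : k :=
  Mcoef G (b ++ c).

(* coefficient of M_b (x) M_c in G (x) H *)
Definition tensorQ (k : fieldType) (G H : series k) (b c : seq nat) : k :=
  Mcoef G b * Mcoef H c.

Definition counitQ (k : fieldType) (G : series k) : k := Mcoef G [::].

(* zeta_Q on an element of degree <= d: sum of coefficients of M_() and M_(n) *)
Definition zetaQ (k : fieldType) (d : nat) (G : series k) : k :=
  Mcoef G [::] + \sum_(1 <= n < d.+1) Mcoef G [:: n].

Definition zetaB (k : fieldType) (V : finType) (B : {set {set V}}) : k :=
  (discrete B)%:R.

(* Main.v *)
Require Import Defs.
From HB Require Import structures.
From mathcomp Require Import all_boot all_order all_algebra.
From mathcomp Require Import zify.
From Stdlib Require Import ClassicalEpsilon.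
Set Implicit Arguments. Unset Strict Implicit. Unset Printing Implicit Defensive.
Import Order.TTheory GRing.Theory Num.Theory.
Local Open Scope ring_scope.

Definition uam (V : finType) (f : V -> nat) (A : {set V}) : bool :=
  [exists a in A, [forall i in A, (i != a) ==> (f i < f a)%N]].
Definition genc (V : finType) (B : {set {set V}}) (f : V -> nat) : bool :=
  [forall I in B, uam f I].

Section PartA.
Variable V : finType.
Implicit Types (f : V -> nat) (A : {set V}) (B : {set {set V}}).

Lemma linf_ext f x x' : (forall v, x v = x' v) -> linf f x = linf f x'.
Proof. by move=> H; apply: eq_bigr => v _; rewrite H. Qed.

Lemma linf_evec f a : linf f (evec a) = (f a)%:R.
Proof.
rewrite /linf (bigD1 a) //= /evec eqxx mulr1 big1 ?addr0 // => v /negPf.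
by rewrite eq_sym => ->; rewrite mulr0.
Qed.

Lemma linf_conv f A (l : V -> rat) :
  linf f (fun v => \sum_(i in A) l i * evec i v) = \sum_(i in A) l i * (f i)%:R.
Proof.
rewrite /linf; under eq_bigr do rewrite mulr_sumr.
rewrite exchange_big /=; apply: eq_bigr => i _.
rewrite -(linf_evec f i) /linf mulr_sumr.
by apply: eq_bigr => v _; rewrite mulrCA.
Qed.

Lemma linf_sum f B (y : {set V} -> V -> rat) :
  linf f (fun v => \sum_(I in B) y I v) = \sum_(I in B) linf f (y I).
Proof.
rewrite /linf; under eq_bigr do rewrite mulr_sumr.
by rewrite exchange_big.
Qed.

Lemma conv_bound f A a x : (forall i, i \in A -> (f i <= f a)%N) ->
  in_conv A (@evec V) x -> linf f x <= (f a)%:R.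
Proof.
move=> Ha [l [l0 [l1 xE]]]; rewrite (linf_ext _ xE) linf_conv.
have <- : \sum_(i in A) l i * (f a)%:R = (f a)%:R by rewrite -mulr_suml l1 mul1r.
apply: ler_sum => i iA.
by rewrite ler_wpM2l ?l0 // ler_nat Ha.
Qed.

Lemma conv_eq f A a x : a \in A -> (forall i, i \in A -> i != a -> (f i < f a)%N) ->
  in_conv A (@evec V) x -> linf f x = (f a)%:R -> forall v, x v = evec a v.
Proof.
move=> aA Ha [l [l0 [l1 xE]]]; rewrite (linf_ext _ xE) linf_conv => E.
have H0 : \sum_(i in A) l i * ((f a)%:R - (f i)%:R) = 0.
  under eq_bigr do rewrite mulrBr.
  by rewrite sumrB -mulr_suml l1 mul1r E subrr.
have nn : forall j, j \in A -> 0 <= l j * ((f a)%:R - (f j)%:R).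
  move=> j jA; apply: mulr_ge0; first exact: l0.
  rewrite subr_ge0 ler_nat; case: (j =P a) => [->//|/eqP ja].
  exact: ltnW (Ha j jA ja).
have Hz := psumr_eq0P nn H0.
have lz : forall i, i \in A -> i != a -> l i = 0.
  move=> i iA ia; have /eqP := Hz i iA.
  rewrite mulf_eq0 subr_eq0 eqr_nat (gtn_eqF (Ha i iA ia)) orbF.
  by move/eqP.
have la : l a = 1.
  by rewrite -l1 (bigD1 a) //= big1 ?addr0 // => i /andP[iA ia]; apply: lz.
move=> v; rewrite xE (bigD1 a) //= big1 ?addr0 ?la ?mul1r // => i /andP[iA ia].
by rewrite lz ?mul0r.
Qed.


Lemma conv_evec A a : a \in A -> in_conv A (@evec V) (evec a).
Proof.
move=> aA; exists (fun i => (i == a)%:R); split; first by move=> i _; rewrite ler0n.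
split; first by rewrite (bigD1 a) //= eqxx big1 ?addr0 // => i /andP[_ /negPf ->].
move=> v; rewrite (bigD1 a) //= eqxx mul1r big1 ?addr0 // => i /andP[_ /negPf ->].
by rewrite mul0r.
Qed.

Definition ptI (s : {set V} -> option V) I : V -> rat :=
  fun v => oapp (fun a => evec a v) 0 (s I).
Definition pt B (s : {set V} -> option V) : V -> rat :=
  fun v => \sum_(I in B) ptI s I v.

Section Sel.
Variables (B : {set {set V}}) (f : V -> nat) (s : {set V} -> option V).
Hypothesis Hs : forall I, I \in B ->
  exists2 a, s I = Some a & (a \in I) && [forall i in I, f i <= f a]%N.

Lemma pt_nesto : nesto B (pt B s).
Proof.
exists (ptI s); split => // I IB; have [a sa /andP[aA _]] := Hs IB.
by rewrite /ptI sa /=; exact: conv_evec.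
Qed.

Lemma pt_linf : linf f (pt B s) = \sum_(I in B) oapp (fun a => (f a)%:R) 0 (s I).
Proof.
rewrite /pt linf_sum; apply: eq_bigr => I IB; have [a sa _] := Hs IB.
by rewrite /ptI sa /= -linf_evec.
Qed.

Lemma pt_max y : nesto B y -> linf f y <= linf f (pt B s).
Proof.
move=> [z [zc yE]]; rewrite (linf_ext _ yE) linf_sum pt_linf.
apply: ler_sum => I IB; have [a sa /andP[aA /forall_inP Ha]] := Hs IB.
by rewrite sa /=; apply: conv_bound (zc I IB) => i /Ha.
Qed.

Lemma pt_strict y : (forall I, I \in B -> forall a, s I = Some a ->
    forall i, i \in I -> i != a -> (f i < f a)%N) ->
  nesto B y -> linf f y = linf f (pt B s) -> forall v, y v = pt B s v.
Proof.
move=> Hst [z [zc yE]]; rewrite (linf_ext _ yE) linf_sum pt_linf => E.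
have nn : forall I, I \in B -> 0 <= oapp (fun a => (f a)%:R) 0 (s I) - linf f (z I).
  move=> I IB; have [a sa /andP[aA /forall_inP Ha]] := Hs IB.
  by rewrite subr_ge0 sa /=; apply: conv_bound (zc I IB) => i /Ha.
have H0 : \sum_(I in B) (oapp (fun a => (f a)%:R) 0 (s I) - linf f (z I)) = 0.
  by rewrite sumrB E subrr.
have Hz := psumr_eq0P nn H0.
move=> v; rewrite yE /pt; apply: eq_bigr => I IB.
have [a sa /andP[aA _]] := Hs IB.
have /eqP := Hz I IB; rewrite subr_eq0 sa /= eq_sym => /eqP Ez.
rewrite /ptI sa /=; exact: (conv_eq aA (Hst I IB a sa) (zc I IB) Ez).
Qed.
End Sel.

Lemma conv_n0 A p x : in_conv A p x -> A != set0.
Proof.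
move=> [l [_ [l1 _]]]; apply/negP => /eqP A0; move: l1; rewrite A0 big_set0.
by move/eqP; rewrite eq_sym oner_eq0.
Qed.

Lemma argmax_ex f A : A != set0 -> exists a, (a \in A) && [forall i in A, f i <= f a]%N.
Proof.
case/set0Pn => a0 a0A; case: (arg_maxnP f a0A) => a aA Ha.
by exists a; apply/andP; split => //; apply/forall_inP => i /Ha.
Qed.

Lemma generic_nesto B f : generic (nesto B) f <-> genc B f.
Proof.
split.
- move=> [x [nx Hx]]; apply/forall_inP => I0 IB0.
  case U: (uam f I0) => //; exfalso.
  have ne : forall I, I \in B -> I != set0.
    by move=> I IB; case: nx => z [zc _]; exact: conv_n0 (zc I IB).
  pose s (I : {set V}) := [pick a in I | [forall i in I, f i <= f a]%N].
  have Hs : forall I, I \in B ->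
      exists2 a, s I = Some a & (a \in I) && [forall i in I, f i <= f a]%N.
    move=> I IB; rewrite /s; case: pickP => [a Ha|H]; first by exists a.
    by have [a Ha] := argmax_ex f (ne I IB); move: (H a); rewrite Ha.
  have key : forall s', (forall I, I \in B ->
      exists2 a, s' I = Some a & (a \in I) && [forall i in I, f i <= f a]%N) ->
      forall v, pt B s' v = x v.
    move=> s' Hs'; have [le1 E] := Hx _ (pt_nesto Hs').
    apply: E; apply/eqP; rewrite eq_le le1 /=; exact: pt_max.
  have [a0 sa0 /andP[a0I /forall_inP Ha0]] := Hs I0 IB0.
  move/negbT: U; rewrite negb_exists_in => /forall_inP /(_ a0 a0I).
  rewrite negb_forall_in => /exists_inP [b bI].
  rewrite negb_imply -leqNgt => /andP [ba0 fab].
  pose s' I := if I == I0 then Some b else s I.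
  have Hs' : forall I, I \in B ->
      exists2 a, s' I = Some a & (a \in I) && [forall i in I, f i <= f a]%N.
    move=> I IB; rewrite /s'; case: eqP => [->|_]; last exact: Hs.
    exists b => //; rewrite bI /=; apply/forall_inP => i iI.
    exact: leq_trans (Ha0 i iI) fab.
  have := key s Hs b; rewrite -(key s' Hs' b) /pt (bigD1 I0) //= [in RHS](bigD1 I0) //=.
  rewrite (eq_bigr (fun I => ptI s' I b)); last by move=> I /andP[_ /negPf]; rewrite /ptI /s' => ->.
  rewrite /ptI /s' eqxx sa0 /= /evec eq_sym (negPf ba0) eqxx => /addIr /eqP.
  by rewrite eq_sym oner_eq0.
- move=> /forall_inP G.
  pose s (I : {set V}) := [pick a in I | [forall i in I, (i != a) ==> (f i < f a)%N]].
  have Hst : forall I, I \in B -> forall a, s I = Some a ->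
      forall i, i \in I -> i != a -> (f i < f a)%N.
    move=> I IB a; rewrite /s; case: pickP => // a' /andP[_ /forall_inP H] [<-] i iI ia.
    by move: (H i iI); rewrite ia.
  have Hs : forall I, I \in B ->
      exists2 a, s I = Some a & (a \in I) && [forall i in I, f i <= f a]%N.
    move=> I IB; have := G I IB; rewrite /uam => /exists_inP [a aI Ha].
    rewrite /s; case: pickP => [a' /andP[a'I Ha']|H]; last by move: (H a); rewrite aI Ha.
    exists a' => //; rewrite a'I; apply/forall_inP => i iI.
    move/forall_inP: Ha' => /(_ i iI); case: (i =P a') => [->//|_ /= /ltnW //].
  exists (pt B s); split; first exact: (pt_nesto Hs).
  move=> y ny; split; first exact: (pt_max Hs).
  by move=> E; apply: (pt_strict Hs Hst).
Qed.

End PartA.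

Local Close Scope ring_scope.

Definition fibn (V : finType) (g : V -> nat) (j : nat) : nat := #|[set v | g v == j]|.

Definition cnt (V : finType) (n : nat) (B : {set {set V}}) (h : nat -> nat) : nat :=
  #|[set g : {ffun V -> 'I_n} | genc B (fun v => nat_of_ord (g v)) &&
      [forall j : 'I_n, fibn (fun v => nat_of_ord (g v)) j == h j]]|.

Lemma uam_ext (V : finType) (f f' : V -> nat) A :
  (forall x y, (f x < f y) = (f' x < f' y)) -> uam f A = uam f' A.
Proof.
move=> H; apply: eq_existsb => a; congr (_ && _); apply: eq_forallb => i.
by rewrite H.
Qed.

Lemma genc_ext (V : finType) (B : {set {set V}}) (f f' : V -> nat) :
  (forall x y, (f x < f y) = (f' x < f' y)) -> genc B f = genc B f'.
Proof.
move=> H; apply: eq_forallb => I; congr (_ ==> _); exact: uam_ext.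
Qed.

Lemma pboolE (P : Prop) (b : bool) : (P <-> b) -> pbool P = b.
Proof.
rewrite /pbool; case: excluded_middle_informative => [p|np] [H1 H2].
  by rewrite H1.
by case: b H1 H2 => // _ H2; case: (np (H2 isT)).
Qed.

Lemma FB_cnt (k : fieldType) (V : finType) (B : {set {set V}}) (s : seq nat) n :
  size s = n -> FB k B s = ((cnt n B (nth 0 s))%:R)%R.
Proof.
move=> <-; rewrite /FB /Fpoly /cnt; congr (GRing.natmul _ _); apply: eq_card => g.
rewrite !inE; congr (_ && _).
apply: pboolE; rewrite generic_nesto (@genc_ext _ _ _ (fun v => nat_of_ord (g v))) //.
Qed.

Lemma cnt_ext (V : finType) n (B : {set {set V}}) (h h' : nat -> nat) :
  (forall j, j < n -> h j = h' j) -> cnt n B h = cnt n B h'.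
Proof.
move=> H; apply: eq_card => g; rewrite !inE; congr (_ && _).
by apply: eq_forallb => j; rewrite H.
Qed.

Lemma bump_lt h x y : (bump h x < bump h y) = (x < y).
Proof. rewrite /bump; case: (leqP h x); case: (leqP h y) => /= *; lia. Qed.

Lemma unbump_lt n (j0 j : 'I_n.+1) : j != j0 -> unbump j0 j < n.
Proof.
move=> /eqP H; have := ltn_ord j0; have := ltn_ord j; have : (j : nat) <> j0 by move=> E; apply: H; apply: val_inj.
rewrite /unbump; case: (ltnP j0 j) => /= *; lia.
Qed.

Lemma bump_inj h : injective (bump h).
Proof. exact: can_inj (bumpK h). Qed.

Section Lift.
Variable V : finType.

Lemma fibn_bump (f : V -> nat) h j : fibn (fun v => bump h (f v)) (bump h j) = fibn f j.
Proof. by apply: eq_card => v; rewrite !inE (inj_eq (@bump_inj h)). Qed.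

Lemma fibn_bump0 (f : V -> nat) h : fibn (fun v => bump h (f v)) h = 0.
Proof.
apply/eqP; rewrite cards_eq0; apply/eqP/setP => v; rewrite !inE.
by apply/negbTE; rewrite eq_sym neq_bump.
Qed.

Lemma fibn_gt0 (f : V -> nat) j v : f v = j -> 0 < fibn f j.
Proof. by move=> E; apply/card_gt0P; exists v; rewrite inE E. Qed.

Lemma cnt_lift n (B : {set {set V}}) (h : nat -> nat) (j0 : 'I_n.+1) : h j0 = 0 ->
  cnt n.+1 B h = cnt n B (fun j => h (bump j0 j)).
Proof.
move=> h0; rewrite /cnt.
pose L (g' : {ffun V -> 'I_n}) : {ffun V -> 'I_n.+1} := [ffun v => lift j0 (g' v)].
have Linj : injective L.
  move=> g1 g2 /ffunP E; apply/ffunP => v; have := E v; rewrite !ffunE.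
  exact: lift_inj.
rewrite -(card_imset _ Linj); apply: eq_card => g; rewrite inE.
apply/idP/imsetP.
- case/andP => Gg /forallP Fg.
  have gn : forall v, g v != j0.
    move=> v; apply/negP => /eqP E.
    have := @fibn_gt0 (fun v => nat_of_ord (g v)) j0 v (f_equal val E).
    by rewrite (eqP (Fg j0)) h0.
  have gn' : forall v, (nat_of_ord (g v) == nat_of_ord j0) = false := fun v => negPf (gn v).
  exists [ffun v => Ordinal (unbump_lt (gn v))].
  + have gE : forall v, nat_of_ord (g v) = bump j0 (unbump j0 (g v)).
      by move=> v; rewrite unbumpKcond gn'.
    rewrite inE; apply/andP; split.
      rewrite (@genc_ext _ _ _ (fun v => nat_of_ord (g v))) // => x y.
      by rewrite !ffunE /= [in RHS](gE x) [in RHS](gE y) bump_lt.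
    apply/forallP => j; rewrite -(fibn_bump _ j0).
    suff -> : fibn (fun v => bump j0 ([ffun v => Ordinal (unbump_lt (gn v))] v)) (bump j0 j)
      = fibn (fun v => nat_of_ord (g v)) (lift j0 j) by exact: Fg (lift j0 j).
    by apply: eq_card => v; rewrite !inE ffunE /= -gE.
  + apply/ffunP => v; rewrite !ffunE; apply: val_inj => /=.
    by rewrite unbumpKcond gn'.
- case=> g'; rewrite inE => /andP[Gg' /forallP Fg'] ->; apply/andP; split.
    rewrite (@genc_ext _ _ _ (fun v => nat_of_ord (g' v))) // => x y.
    by rewrite !ffunE /= bump_lt.
  apply/forallP => j; case: (unliftP j0 j) => [j'|] ->.
    suff -> : fibn (fun v => nat_of_ord (L g' v)) (lift j0 j') =
        fibn (fun v => nat_of_ord (g' v)) j' by exact: Fg' j'.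
    by rewrite -[RHS](fibn_bump _ j0); apply: eq_card => v; rewrite !inE /L ffunE.
  suff -> : fibn (fun v => nat_of_ord (L g' v)) j0 = 0 by rewrite h0.
  rewrite -(fibn_bump0 (fun v => nat_of_ord (g' v)) j0).
  by apply: eq_card => v; rewrite !inE /L ffunE.
Qed.
End Lift.

Section Qsym.
Variables (V : finType) (B : {set {set V}}).
Definition Cs (m : seq nat) := cnt (size m) B (nth 0 m).

Lemma Cs_zero m1 m2 : Cs (m1 ++ 0 :: m2) = Cs (m1 ++ m2).
Proof.
have e : size (m1 ++ 0 :: m2) = (size (m1 ++ m2)).+1 by rewrite !size_cat /= addnS.
have lt : size m1 < (size (m1 ++ m2)).+1 by rewrite size_cat ltnS leq_addr.
rewrite /Cs e (@cnt_lift _ _ _ _ (Ordinal lt)) /=; last by rewrite nth_cat ltnn subnn.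
apply: cnt_ext => j _; rewrite /bump !nth_cat.
case: (ltnP j (size m1)) => H.
  by rewrite /= add0n H.
by rewrite /= add1n ltnNge (leqW H) /= subSn.
Qed.

Lemma Cs_filter m1 m2 : Cs (m1 ++ m2) = Cs (m1 ++ [seq a <- m2 | a != 0]).
Proof.
elim: m2 m1 => [//|a m2 IH] m1 /=.
case: eqP => [->|_]; first by rewrite Cs_zero IH.
by rewrite -cat_rcons IH cat_rcons.
Qed.
End Qsym.

Lemma FB_qsym (k : fieldType) (V : finType) (B : {set {set V}}) : qsym (FB k B).
Proof.
move=> m; rewrite !(FB_cnt k B (erefl _)); congr (GRing.natmul _ _).
exact: (Cs_filter B [::] m).
Qed.

Lemma sum_fibn (V : finType) n (g : V -> 'I_n) :
  \sum_(j < n) fibn (fun v => nat_of_ord (g v)) j = #|V|.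
Proof.
rewrite -sum1_card (partition_big g predT) //=.
apply: eq_bigr => j _; rewrite sum1dep_card; apply: eq_card => v; rewrite !inE.
by [].
Qed.

Lemma sumn_ord (m : seq nat) : \sum_(j < size m) nth 0 m j = sumn m.
Proof. by rewrite sumnE (big_nth 0) big_mkord. Qed.

Lemma FB_hom (k : fieldType) (V : finType) (B : {set {set V}}) : homogeneous #|V| (FB k B).
Proof.
move=> m Hm; rewrite (FB_cnt k B (erefl _)).
suff -> : cnt (size m) B (nth 0 m) = 0 by [].
apply/eqP; rewrite /cnt cards_eq0.
apply/eqP/setP => g; rewrite !inE; apply/negP => /andP[_ /forallP F].
have E : \sum_(j < size m) fibn (fun v => nat_of_ord (g v)) j = \sum_(j < size m) nth 0 m j.
  by apply: eq_bigr => j _; apply/eqP.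
by move: Hm; rewrite -sumn_ord -E sum_fibn eqxx.
Qed.

Lemma card_set_cond (T : finType) (b : bool) :
  #|[set x : T | b]| = if b then #|T| else 0.
Proof. by case: b; rewrite ?cardsT // cards0. Qed.

Lemma fibn_void (g : void -> nat) j : fibn g j = 0.
Proof. by apply/eqP; rewrite cards_eq0; apply/eqP/setP => -[]. Qed.

Lemma FB_unit (k : fieldType) m : FB k (set0 : {set {set void}}) m = oneS k m.
Proof.
rewrite (FB_cnt k _ (erefl _)) /oneS /cnt.
have G0 : forall f : void -> nat, genc set0 f.
  by move=> f; apply/forall_inP => I; rewrite in_set0.
under eq_finset do rewrite G0 /=.
under eq_finset do under eq_forallb do rewrite fibn_void.
rewrite card_set_cond card_ffun card_ord card_void expn0.
congr (GRing.natmul _ _); congr nat_of_bool.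
apply/forallP/(all_nthP 0) => [H i im|H i].
  by have := H (Ordinal im); rewrite eq_sym.
by rewrite eq_sym H.

Qed.

Lemma bs_empty (V : finType) (B : {set {set V}}) : building_set B -> #|V| = 0 -> B = set0.
Proof.
move=> [n0 _] V0; apply/setP => I; rewrite in_set0; apply/negP => IB.
have := n0 I IB; rewrite -cards_eq0 => /negP; apply.
by rewrite -leqn0 -V0 max_card.
Qed.

Lemma FB_counit (k : fieldType) (V : finType) (B : {set {set V}}) :
  building_set B -> counitQ (FB k B) = ((#|V| == 0)%N%:R)%R.
Proof.
move=> bB; rewrite /counitQ /Mcoef (FB_cnt k _ (erefl _)) /cnt; congr (GRing.natmul _ _).
case: (posnP #|V|) => V0.
  rewrite (bs_empty bB V0).
  have G0 : forall f : V -> nat, genc set0 f.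
    by move=> f; apply/forall_inP => I; rewrite in_set0.
  under eq_finset do rewrite G0 /=.
  have F0 : forall P : pred 'I_0, [forall j, P j] by move=> P; apply/forallP => -[].
  under eq_finset do rewrite F0.
  by rewrite card_set_cond card_ffun card_ord V0.
apply/eqP; rewrite -leqn0.
by rewrite (leq_trans (max_card _)) // card_ffun card_ord exp0n.
Qed.

Lemma uam0 (V : finType) (I : {set V}) : uam (fun _ => 0) I = [exists a, I == [set a]].
Proof.
apply/exists_inP/existsP => [[a aI /forall_inP H]|[a /eqP ->]].
  exists a; apply/eqP/setP => i; rewrite inE; apply/idP/eqP => [iI|->//].
  by have := H i iI; case: eqP.
by exists a; rewrite ?set11 //; apply/forall_inP => i; rewrite inE => ->.
Qed.

Lemma genc0_discrete (V : finType) (B : {set {set V}}) :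
  building_set B -> genc B (fun _ => 0) = discrete B.
Proof.
move=> [_ [s1 _]]; rewrite /discrete; apply/forall_inP/eqP => [H|->].
  apply/setP => I; apply/idP/imsetP => [IB|[v _ ->]]; last exact: s1.
  by have := H I IB; rewrite uam0 => /existsP [a /eqP ->]; exists a.
by move=> I /imsetP [v _ ->]; rewrite uam0; apply/existsP; exists v.
Qed.

Lemma FB_zeta (k : fieldType) (V : finType) (B : {set {set V}}) :
  building_set B -> zetaQ #|V| (FB k B) = zetaB k B.
Proof.
move=> bB; have := FB_counit k bB; rewrite /counitQ /zetaQ /zetaB /Mcoef => ->.
case: (posnP #|V|) => V0.
  rewrite V0.   rewrite big_geq // addr0 (bs_empty bB V0) /discrete; congr (GRing.natmul _ _).
  suff -> : [set [set v] | v in V] = set0 by rewrite eqxx.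
  apply/setP => I; rewrite in_set0; apply/negP => /imsetP [v _ _].
  by have := card0_eq V0 v.
rewrite add0r big_nat_recr //= big_nat_cond big1 ?add0r; last first.
  move=> n /andP[/andP[_ nd] _]; apply: FB_hom; rewrite /= addn0.
  by rewrite (ltn_eqF nd).
rewrite (FB_cnt k _ (erefl _)) /cnt; congr (GRing.natmul _ _).
have E : forall g : {ffun V -> 'I_1}, (genc B (fun v => nat_of_ord (g v)) &&
    [forall j : 'I_1, fibn (fun v => nat_of_ord (g v)) j == nth 0 [:: #|V|] j]) = genc B (fun _ => 0).
  move=> g; rewrite (@genc_ext _ _ _ (fun _ => 0)) => [|x y]; last by rewrite !ord1.
  case: (genc _ _) => //=; apply/forallP => j; rewrite ord1 /=.
  by apply/eqP; apply: eq_card => v; rewrite !inE ord1.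
under eq_finset do rewrite E.
by rewrite card_set_cond card_ffun card_ord exp1n genc0_discrete.
Qed.

Lemma le_seqs_all2 m s : (s \in le_seqs m) = all2 leq s m.
Proof.
elim: m s => [|a m IH] s; first by case: s.
have -> : le_seqs (a :: m) = [seq i :: s | i <- iota 0 a.+1, s <- le_seqs m] by [].
case: s => [|b t].
  by apply/allpairsP => -[[x y] [_ _]].
have -> : all2 leq (b :: t) (a :: m) = (b <= a) && all2 leq t m by [].
have mi : forall z, (z \in iota 0 a.+1) = (z <= a) by move=> z; rewrite mem_iota.
apply/allpairsP/andP => [[[x y] [xI yL [-> ->]]]|[ba tm]].
  by rewrite -IH -mi; split.
by exists (b, t); split => //; rewrite ?mi ?IH.
Qed.

Lemma le_seqs_uniq m : uniq (le_seqs m).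
Proof.
elim: m => [//|a m IH].
have -> : le_seqs (a :: m) = [seq i :: s | i <- iota 0 a.+1, s <- le_seqs m] by [].
apply: allpairs_uniq => //; first exact: iota_uniq.
by move=> [x y] [x' y'] _ _ /= [-> ->].
Qed.

Lemma le_seqs_mem m s : s \in le_seqs m <->
  size s = size m /\ forall j, j < size m -> nth 0 s j <= nth 0 m j.
Proof.
rewrite le_seqs_all2 all2E; split.
  case/andP => /eqP sz /(all_nthP (0, 0)) H; split => // j jm.
  have := H j; rewrite size_zip sz minnn nth_zip //; exact.
move=> [sz H]; rewrite sz eqxx /=; apply/(all_nthP (0, 0)) => j.
by rewrite size_zip sz minnn nth_zip // => /H.
Qed.

Lemma uam_imset (T U : finType) (h : T -> U) (f : U -> nat) (A : {set T}) :
  injective h -> uam f (h @: A) = uam (fun x => f (h x)) A.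
Proof.
move=> hi; apply/exists_inP/exists_inP => [[u /imsetP[a aA ->] /forall_inP H]|[a aA /forall_inP H]].
  exists a => //; apply/forall_inP => i iA.
  by have := H (h i) (imset_f _ iA); rewrite (inj_eq hi).
exists (h a); first exact: imset_f.
by apply/forall_inP => u /imsetP[i iA ->]; rewrite (inj_eq hi); exact: H.
Qed.

Lemma genc_eq (V : finType) (B : {set {set V}}) (f f' : V -> nat) :
  f =1 f' -> genc B f = genc B f'.
Proof. by move=> E; apply: genc_ext => x y; rewrite !E. Qed.

Lemma fibn_eq (V : finType) (f f' : V -> nat) j : f =1 f' -> fibn f j = fibn f' j.
Proof. by move=> E; apply: eq_card => v; rewrite !inE E. Qed.

Lemma sum_bool_card (T : finType) (A : pred T) (b : pred T) :
  \sum_(x | A x) (b x : nat) = #|[set x | A x && b x]|.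
Proof.
rewrite -sum1dep_card big_mkcondr; apply: eq_bigr => x _; by case: (b x).
Qed.

Lemma mkseq_eqP (f : nat -> nat) (s : seq nat) n : size s = n ->
  (mkseq f n == s) = [forall j : 'I_n, f j == nth 0 s j].
Proof.
move=> sz; apply/eqP/forallP => [<- j|H].
  by rewrite nth_mkseq.
apply: (@eq_from_nth _ 0); first by rewrite size_mkseq.
by rewrite size_mkseq => j jn; rewrite nth_mkseq //; apply/eqP; exact: (H (Ordinal jn)).
Qed.

Section Prod.
Variables (V1 V2 : finType) (B1 : {set {set V1}}) (B2 : {set {set V2}}).

Lemma inl_inj' : injective (@inl V1 V2). Proof. by move=> a b []. Qed.
Lemma inr_inj' : injective (@inr V1 V2). Proof. by move=> a b []. Qed.

Lemma genc_dunion (f : V1 + V2 -> nat) :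
  genc (dunion B1 B2) f = genc B1 (fun a => f (inl a)) && genc B2 (fun b => f (inr b)).
Proof.
apply/forall_inP/andP => [H|[/forall_inP H1 /forall_inP H2] I].
  split; apply/forall_inP => I IB.
    rewrite -(uam_imset _ _ inl_inj'); apply: H.
    by rewrite /dunion inE; apply/orP; left; apply/imsetP; exists I.
  rewrite -(uam_imset _ _ inr_inj'); apply: H.
  by rewrite /dunion inE; apply/orP; right; apply/imsetP; exists I.
rewrite /dunion inE => /orP[/imsetP[J JB ->]|/imsetP[J JB ->]].
  by rewrite uam_imset; [exact: H1|exact: inl_inj'].
by rewrite uam_imset; [exact: H2|exact: inr_inj'].
Qed.

Lemma fibn_sum (f : V1 + V2 -> nat) j :
  fibn f j = fibn (fun a => f (inl a)) j + fibn (fun b => f (inr b)) j.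
Proof. by rewrite /fibn -!sum1dep_card big_sumType. Qed.
End Prod.

Lemma cnt_prod (V1 V2 : finType) (B1 : {set {set V1}}) (B2 : {set {set V2}}) (m : seq nat) :
  cnt (size m) (dunion B1 B2) (nth 0 m) =
  \sum_(s <- le_seqs m) cnt (size m) B1 (nth 0 s) *
                        cnt (size m) B2 (fun j => nth 0 m j - nth 0 s j).
Proof.
pose n := size m.
pose P := [set x : {ffun V1 -> 'I_n} * {ffun V2 -> 'I_n} |
   [&& genc B1 (fun a => nat_of_ord (x.1 a)), genc B2 (fun b => nat_of_ord (x.2 b)) &
       [forall j : 'I_n, fibn (fun a => nat_of_ord (x.1 a)) j +
                         fibn (fun b => nat_of_ord (x.2 b)) j == nth 0 m j]]].
pose K (g : {ffun V1 + V2 -> 'I_n}) : {ffun V1 -> 'I_n} * {ffun V2 -> 'I_n} :=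
  ([ffun a => g (inl a)], [ffun b => g (inr b)]).
have Kinj : injective K.
  move=> g g' [E1 E2]; apply/ffunP => -[a|b].
    by have := congr1 (fun f : {ffun V1 -> 'I_n} => f a) E1; rewrite /= !ffunE.
  by have := congr1 (fun f : {ffun V2 -> 'I_n} => f b) E2; rewrite /= !ffunE.
have -> : cnt n (dunion B1 B2) (nth 0 m) = #|P|.
  rewrite /cnt -(card_imset _ Kinj); apply: eq_card => x; apply/imsetP/idP.
    case=> g; rewrite inE genc_dunion => /andP[/andP[G1 G2] /forallP F] ->.
    rewrite inE /=; apply/and3P; split.
    - by rewrite (@genc_eq _ _ _ (fun a => nat_of_ord (g (inl a)))) // => a; rewrite ffunE.
    - by rewrite (@genc_eq _ _ _ (fun a => nat_of_ord (g (inr a)))) // => a; rewrite ffunE.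
    - apply/forallP => j; rewrite -(eqP (F j)) fibn_sum.
      rewrite (@fibn_eq _ _ (fun a => nat_of_ord (g (inl a))) _) => [|a]; last by rewrite ffunE.
      by rewrite (@fibn_eq _ _ (fun a => nat_of_ord (g (inr a))) _) => [|a]; last by rewrite ffunE.
  rewrite inE => /and3P[G1 G2 /forallP F].
  pose g : {ffun V1 + V2 -> 'I_n} :=
    [ffun z => match z with inl a => x.1 a | inr b => x.2 b end].
  exists g.
    rewrite inE genc_dunion; apply/andP; split.
      apply/andP; split.
        by rewrite (@genc_eq _ _ _ (fun a => nat_of_ord (x.1 a))) // => a; rewrite ffunE.
      by rewrite (@genc_eq _ _ _ (fun a => nat_of_ord (x.2 a))) // => a; rewrite ffunE.
    apply/forallP => j; rewrite fibn_sum -(eqP (F j)).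
    rewrite (@fibn_eq _ _ (fun a => nat_of_ord (x.1 a)) _) => [|a]; last by rewrite ffunE.
    by rewrite (@fibn_eq _ _ (fun a => nat_of_ord (x.2 a)) _) => [|a]; last by rewrite ffunE.
  rewrite /K /g; case: x {F G1 G2 g} => x1 x2 /=; congr (_, _); apply/ffunP => a; by rewrite !ffunE.
pose fs (g1 : {ffun V1 -> 'I_n}) := mkseq (fun j => fibn (fun a => nat_of_ord (g1 a)) j) n.
have fsL : forall x, x \in P -> fs x.1 \in le_seqs m.
  move=> x; rewrite inE => /and3P[_ _ /forallP F]; apply/le_seqs_mem.
  split; first by rewrite size_mkseq.
  by move=> j jn; rewrite nth_mkseq // -(eqP (F (Ordinal jn))) leq_addr.
rewrite -sum1_card.
rewrite (eq_bigr (fun x => \sum_(s <- le_seqs m) ((fs x.1 == s) : nat))); last first.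
  move=> x xP; rewrite (bigD1_seq (fs x.1)) ?le_seqs_uniq ?fsL //= eqxx big1 ?addn0 //.
  by move=> s; rewrite eq_sym => /negPf ->.
rewrite exchange_big /=; apply: eq_big_seq => s sL.
have [sz sle] := (le_seqs_mem m s).1 sL.
rewrite sum_bool_card /cnt -cardsX; apply: eq_card => -[g1 g2]; rewrite !inE /= /fs.
rewrite (mkseq_eqP _ sz).
case: (genc B1 _); case: (genc B2 _); rewrite /= ?andbF //.
apply/andP/andP => [[/forallP F /forallP F1]|[/forallP F1 /forallP F2]]; split; apply/forallP => j.
- exact: F1 j.
- by have := F j; rewrite (eqP (F1 j)) => /eqP <-; rewrite addKn.
- by have := F2 j; rewrite (eqP (F1 j)) => /eqP ->; rewrite subnKC ?sle.
- exact: F1 j.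
Qed.

Lemma FB_prod (k : fieldType) (V1 V2 : finType) (B1 : {set {set V1}}) (B2 : {set {set V2}}) m :
  FB k (dunion B1 B2) m = mulS (FB k B1) (FB k B2) m.
Proof.
rewrite (FB_cnt k _ (erefl _)) cnt_prod /mulS natr_sum; apply: eq_big_seq => s sL.
have [sz sle] := (le_seqs_mem m s).1 sL.
have sz2 : size [seq (p.2 - p.1)%N | p <- zip s m] = size m by rewrite size_map size_zip sz minnn.
rewrite natrM (FB_cnt k _ sz) (FB_cnt k _ sz2); congr (_ * GRing.natmul _ _)%R.
apply: cnt_ext => j jm; rewrite (nth_map (0, 0)) ?size_zip ?sz ?minnn // nth_zip //.
Qed.

Lemma setUl' (T : finType) (A C : {set T}) x : x \in A -> x \in A :|: C.
Proof. by rewrite in_setU => ->. Qed.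

Lemma uam_U (V : finType) (f : V -> nat) (A C : {set V}) : A != set0 ->
  (forall a i, a \in A -> i \in C -> f i < f a) -> uam f (A :|: C) = uam f A.
Proof.
move=> An H; apply/exists_inP/exists_inP => [[a aAC /forall_inP Ha]|[a aA /forall_inP Ha]].
  have aA : a \in A.
    case/setUP: aAC => // aC; case/set0Pn: An => a' a'A.
    have := Ha a' (setUl' _ a'A); have := H a' a a'A aC.
    case: (a' =P a) => [E|_] /=; first by rewrite E ltnn.
    by move=> /ltn_trans H1 /H1; rewrite ltnn.
  by exists a => //; apply/forall_inP => i iA; exact: Ha (setUl' _ iA).
exists a; first exact: setUl'.
apply/forall_inP => i /setUP[iA|iC]; first exact: Ha.
by rewrite H ?implybT.
Qed.

Section Split.
Variables (V : finType) (B : {set {set V}}) (I : {set V}).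

Lemma genc_split (f : V -> nat) p : (forall v, (f v < p) = (v \in I)) ->
  genc B f = genc (restr B I) (fun u => f (val u)) && genc (contr B I) (fun u => f (val u)).
Proof.
move=> key; apply/forall_inP/andP => [H|[/forall_inP H1 /forall_inP H2] K KB].
  split; apply/forall_inP => J.
    rewrite /restr inE => JB; rewrite -(uam_imset _ _ val_inj); exact: H.
  rewrite /contr inE => /andP[Jn /orP[JB|/existsP[I' /andP[I'I KB]]]].
    rewrite -(uam_imset _ _ val_inj); exact: H.
  rewrite -(uam_imset _ _ val_inj) -(@uam_U _ _ _ I'); first exact: H.
    by rewrite imset_eq0.
  move=> a i /imsetP[u _ ->] iI'.
  have := valP u; rewrite -key -leqNgt => /(leq_trans _); apply.
  by rewrite key; exact: (subsetP I'I).
case: (boolP (K \subset I)) => KI.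
  have E : K = [set val x | x in [set u : {v | v \in I} | val u \in K]].
    apply/setP => v; apply/idP/imsetP => [vK|[u]]; last by rewrite inE => uK ->.
    by exists (exist _ v (subsetP KI v vK)) => //; rewrite inE.
  rewrite E uam_imset //; last exact: val_inj.
  by apply: (H1 [set u | val u \in K]); rewrite /restr inE -E.
have E : K :\: I = [set val x | x in [set u : {v | v \notin I} | val u \in K]].
  apply/setP => v; rewrite inE; apply/andP/imsetP => [[vI vK]|[u]].
    by exists (exist (fun v => v \notin I) v vI) => //; rewrite inE.
  by rewrite inE => uK ->; split => //; exact: (valP u).
have Kn : K :\: I != set0 by rewrite setD_eq0.
rewrite -{1}(setID K I) setUC uam_U //; last first.
  move=> a i /setDP[_ aI] /setIP[_ iI].
  by rewrite -key in iI; move: aI; rewrite -key -leqNgt => /(leq_trans iI).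
rewrite E uam_imset; last exact: val_inj.
apply: (H2 [set u : {v | v \notin I} | val u \in K]); rewrite /contr inE -(imset_eq0 val) -E Kn /=.
apply/orP; right; apply/existsP; exists (K :&: I); rewrite subsetIr /=.
by rewrite setUC setID.
Qed.
End Split.

Definition decb (b : bool) : {b} + {~~ b} :=
  if b as c return {c} + {~~ c} then left isT else right isT.

Section Glue.
Variables (V : finType) (I : {set V}) (p q : nat).

Definition glue (g1 : {ffun {v : V | v \in I} -> 'I_p})
    (g2 : {ffun {v : V | v \notin I} -> 'I_q}) : {ffun V -> 'I_(p + q)} :=
  [ffun v => match decb (v \in I) with
             | left H => lshift q (g1 (exist (fun v => v \in I) v H))
             | right H => rshift p (g2 (exist (fun v => v \notin I) v H))
             end].

Variables (g1 : {ffun {v : V | v \in I} -> 'I_p}) (g2 : {ffun {v : V | v \notin I} -> 'I_q}).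

Lemma glue_in (u : {v : V | v \in I}) : glue g1 g2 (val u) = lshift q (g1 u).
Proof.
rewrite ffunE; case: (decb (val u \in I)) => H; first by congr (lshift q (g1 _)); exact: val_inj.
by have := valP u; rewrite (negPf H).
Qed.

Lemma glue_out (u : {v : V | v \notin I}) : glue g1 g2 (val u) = rshift p (g2 u).
Proof.
rewrite ffunE; case: (decb (val u \in I)) => H.
  by have := valP u; rewrite H.
by rewrite (_ : exist (fun v : V => v \notin I) (val u) H = u) //; exact: val_inj.
Qed.

Lemma key_glue v : (nat_of_ord (glue g1 g2 v) < p) = (v \in I).
Proof.
case: (boolP (v \in I)) => H.
  by have := glue_in (exist _ v H); rewrite /= => ->; rewrite /= ltn_ord.
by have := glue_out (exist _ v H); rewrite /= => ->; rewrite /= ltnNge leq_addr.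
Qed.

Lemma fibn_glue_l j : j < p ->
  fibn (fun v => nat_of_ord (glue g1 g2 v)) j = fibn (fun u => nat_of_ord (g1 u)) j.
Proof.
move=> jp; rewrite /fibn -(card_imset _ val_inj); apply: eq_card => v; rewrite inE.
apply/idP/imsetP => [/eqP Hv|[u]].
  have vI : v \in I by rewrite -key_glue Hv.
  exists (exist _ v vI) => //; rewrite inE.
  by have := glue_in (exist _ v vI); rewrite /= => E; rewrite -Hv E.
by rewrite inE => /eqP uj ->; rewrite glue_in /= uj.
Qed.

Lemma fibn_glue_r j :
  fibn (fun v => nat_of_ord (glue g1 g2 v)) (p + j) = fibn (fun u => nat_of_ord (g2 u)) j.
Proof.
rewrite /fibn -(card_imset _ val_inj); apply: eq_card => v; rewrite inE.
apply/idP/imsetP => [/eqP Hv|[u]].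
  have vI : v \notin I by rewrite -key_glue Hv ltnNge leq_addr.
  exists (exist _ v vI) => //; rewrite inE.
  by have := glue_out (exist _ v vI); rewrite /= => E; move: Hv; rewrite E /= => /addnI ->.
by rewrite inE => /eqP uj ->; rewrite glue_out /= uj.
Qed.

Lemma genc_glue (B : {set {set V}}) :
  genc B (fun v => nat_of_ord (glue g1 g2 v)) =
  genc (restr B I) (fun u => nat_of_ord (g1 u)) && genc (contr B I) (fun u => nat_of_ord (g2 u)).
Proof.
rewrite (@genc_split V B I _ p key_glue); congr (_ && _).
  by apply: genc_eq => u; rewrite glue_in.
by apply: genc_ext => x y; rewrite !glue_out /= ltn_add2l.
Qed.


End Glue.

Lemma glue_inj (V : finType) (I : {set V}) (p q : nat) :
  injective (fun x : {ffun {v : V | v \in I} -> 'I_p} * {ffun {v : V | v \notin I} -> 'I_q} => glue x.1 x.2).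
Proof.
move=> [a1 a2] [b1 b2] /= E; congr (_, _); apply/ffunP => u.
  by have := glue_in a1 a2 u; rewrite E glue_in => /lshift_inj ->.
by have := glue_out a1 a2 u; rewrite E glue_out => /rshift_inj ->.
Qed.

Lemma cnt_coprod (V : finType) (B : {set {set V}}) p q (h : nat -> nat) :
  cnt (p + q) B h = \sum_(I : {set V}) cnt p (restr B I) h * cnt q (contr B I) (fun j => h (p + j)).
Proof.
rewrite /cnt.
set S := [set g : {ffun V -> 'I_(p + q)} | _].
pose key (g : {ffun V -> 'I_(p + q)}) := [set v | nat_of_ord (g v) < p].
rewrite -sum1_card (eq_bigr (fun g => \sum_(I : {set V}) ((key g == I) : nat))); last first.
  move=> g _; rewrite (bigD1 (key g)) //= eqxx big1 ?addn0 // => I.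
  by rewrite eq_sym => /negPf ->.
rewrite exchange_big; apply: eq_bigr => I _; rewrite sum_bool_card -cardsX.
rewrite -(card_imset _ (@glue_inj V I p q)); apply: eq_card => g.
rewrite inE; apply/idP/imsetP.
- case/andP; rewrite inE => /andP[Gg /forallP Fg] /eqP kg.
  have keyv : forall v, (nat_of_ord (g v) < p) = (v \in I) by move=> v; rewrite -kg inE.
  have lt1 : forall u : {v : V | v \in I}, nat_of_ord (g (val u)) < p.
    by move=> u; rewrite keyv; exact: (valP u).
  have lt2 : forall u : {v : V | v \notin I}, nat_of_ord (g (val u)) - p < q.
    move=> u; have := ltn_ord (g (val u)); have : ~~ (nat_of_ord (g (val u)) < p).
      by rewrite keyv; exact: (valP u).
    rewrite -leqNgt; lia.
  pose g1 := [ffun u => Ordinal (lt1 u)].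
  pose g2 := [ffun u => Ordinal (lt2 u)].
  have gE : g = glue g1 g2.
    apply/ffunP => v; apply: val_inj; rewrite /glue ffunE.
    case: (decb (v \in I)) => H; rewrite ffunE //=.
    by rewrite subnKC // leqNgt keyv.
  exists (g1, g2) => //.
  move: Gg Fg; rewrite gE genc_glue => /andP[G1 G2] Fg.
  rewrite !inE /= G1 G2 /=; apply/andP; split; apply/forallP => j.
    by have := Fg (lshift q j); rewrite /= fibn_glue_l ?ltn_ord.
  by have := Fg (rshift p j); rewrite /= fibn_glue_r.
- case=> -[g1 g2]; rewrite !inE /= => /andP[/andP[G1 /forallP F1] /andP[G2 /forallP F2]] ->.
  rewrite genc_glue G1 G2 /=; apply/andP; split.
    apply/forallP => j; case: (ltnP j p) => jp.
      by rewrite fibn_glue_l //; exact: (F1 (Ordinal jp)).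
    have jq : j - p < q by have := ltn_ord j; lia.
    by rewrite -(subnKC jp) fibn_glue_r; exact: (F2 (Ordinal jq)).
  by apply/eqP/setP => v; rewrite inE key_glue.
Qed.

Lemma FB_coprod (k : fieldType) (V : finType) (B : {set {set V}}) b c :
  coprodQ (FB k B) b c =
  (\sum_(I : {set V}) tensorQ (FB k (restr B I)) (FB k (contr B I)) b c)%R.
Proof.
rewrite /coprodQ /tensorQ /Mcoef (FB_cnt k B (size_cat b c)) cnt_coprod natr_sum.
apply: eq_bigr => I _; rewrite natrM (FB_cnt k _ (erefl (size b))) (FB_cnt k _ (erefl (size c))).
congr (GRing.natmul _ _ * GRing.natmul _ _)%R; apply: cnt_ext => j jl.
  by rewrite nth_cat jl.
by rewrite nth_cat ltnNge leq_addr /= addKn.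
Qed.

Local Open Scope ring_scope.

Theorem mainTheorem4 (k : fieldType) :
  (* F(B) lies in QSym and is homogeneous of degree |V| (F is graded) *)
  (forall (V : finType) (B : {set {set V}}), building_set B ->
     qsym (FB k B) /\ homogeneous #|V| (FB k B)) /\
  (* unit: F(B_empty) = 1 *)
  (forall m, FB k (set0 : {set {set void}}) m = oneS k m) /\
  (* product: F(B1 ⊔ B2) = F(B1) F(B2) *)
  (forall (V1 V2 : finType) (B1 : {set {set V1}}) (B2 : {set {set V2}}),
     building_set B1 -> building_set B2 ->
     forall m, FB k (dunion B1 B2) m = mulS (FB k B1) (FB k B2) m) /\
  (* coproduct: Delta F(B) = sum_I F(B|_I) (x) F(B/I), compared on the basis M_b (x) M_c *)
  (forall (V : finType) (B : {set {set V}}), building_set B ->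
     forall b c, composition b -> composition c ->
       coprodQ (FB k B) b c =
       \sum_(I : {set V}) tensorQ (FB k (restr B I)) (FB k (contr B I)) b c) /\
  (* counit *)
  (forall (V : finType) (B : {set {set V}}), building_set B ->
     counitQ (FB k B) = (#|V| == 0)%N%:R) /\
  (* characters: zeta_Q o F = zeta *)
  (forall (V : finType) (B : {set {set V}}), building_set B ->
     zetaQ #|V| (FB k B) = zetaB k B).
Proof.
split; first by move=> V B bB; split; [exact: FB_qsym | exact: FB_hom].
split; first exact: FB_unit.
split; first by move=> V1 V2 B1 B2 _ _ m; exact: FB_prod.
split; first by move=> V B _ b c _ _; exact: FB_coprod.
split; first by move=> V B bB; exact: FB_counit.
by move=> V B bB; exact: FB_zeta.
Qed.
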